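(* Let $m\ge2$, $G=CK(2m-1)$, and let $B$ be a blocker for the simple Hamiltonian paths of $G$ whose $m$ edges are parallel (or equal) to the boundary edges $[0,1],[1,2],\dots,[m-1,m]$, one edge per direction. Let $[\alpha,\alpha+1]$ and $[m-\delta-1,m-\delta]$ be, respectively, the first and the last edges of the path $\langle 0,1,\dots,m\rangle$ that belong to $B$ (so $0\le\alpha<\alpha+1\le m-\delta-1<m-\delta\le m$). Then $B$ misses at most one edge of the boundary path $\langle\alpha,\alpha+1,\dots,m-\delta\rangle$.
   Context: $CK(2m-1)$ is the complete convex geometric graph on $2m-1$ points in convex position, labelled clockwise $0,\dots,2m-2$ (elements of $\mathbb{Z}_{2m-1}$), with all segments as edges; boundary edges are $[i,i+1]$. The direction of $[i,j]$ is $i+j\pmod{2m-1}$ and edges are parallel if they have the same direction. A simple Hamiltonian path (SHP) is a path through all vertices whose edges pairwise do not cross; a blocker for SHPs is an edge set of smallest possible size meeting (sharing an edge with) every SHP. (Every blocker has size $m$ and contains at least two boundary edges.) *)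

(* Defs.v *)
From mathcomp Require Import all_boot.
Set Implicit Arguments. Unset Strict Implicit. Unset Printing Implicit Defensive.

(* Number of points of CK(2m-1). Vertices are 'I_(npts m) = {0,...,2m-2}, in
   clockwise order; an edge is a 2-element subset of vertices. *)
Definition npts (m : nat) : nat := (2 * m).-1.

Section CK.
Variable n : nat.

Definition is_edge (e : {set 'I_n}) : bool := #|e| == 2.

(* Two segments between points in convex position cross iff they have four
   distinct endpoints which alternate along the circle. *)
Definition cross1 (e f : {set 'I_n}) : bool :=
  [exists a : 'I_n, [exists b : 'I_n, [exists c : 'I_n, [exists d : 'I_n,
     [&& e == [set a; b], f == [set c; d], a < c, c < b & b < d]]]]].

Definition cross (e f : {set 'I_n}) : bool := cross1 e f || cross1 f e.

Definition path_edges (p : seq 'I_n) : seq {set 'I_n} :=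
  [seq [set xy.1; xy.2] | xy <- zip p (behead p)].

Definition is_SHP (p : seq 'I_n) : bool :=
  [&& uniq p, size p == n &
      all (fun e => all (fun f => ~~ cross e f) (path_edges p)) (path_edges p)].

Definition meets_all_SHP (B : {set {set 'I_n}}) : Prop :=
  forall p : seq 'I_n, is_SHP p -> has (fun e => e \in B) (path_edges p).

Definition is_blocker (B : {set {set 'I_n}}) : Prop :=
  [/\ forall e, e \in B -> is_edge e,
      meets_all_SHP B &
      forall B' : {set {set 'I_n}}, (forall e, e \in B' -> is_edge e) ->
        meets_all_SHP B' -> #|B| <= #|B'|].

Definition direction (e : {set 'I_n}) : nat := (\sum_(x in e) (x : nat)) %% n.

Definition bd (i : nat) : {set 'I_n} :=
  [set x : 'I_n | (x == i %% n :> nat) || (x == i.+1 %% n :> nat)].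

End CK.

(* Main.v *)
Require Import Defs.
From mathcomp Require Import all_boot zify.
Set Implicit Arguments. Unset Strict Implicit. Unset Printing Implicit Defensive.

Definition lcross (e f : nat * nat) : bool :=
  let a := minn e.1 e.2 in let b := maxn e.1 e.2 in
  let c := minn f.1 f.2 in let d := maxn f.1 f.2 in
  ((a < c) && (c < b) && (b < d)) || ((c < a) && (a < d) && (d < b)).

Lemma lcross_hull l r u1 w1 u w :
  l <= u1 <= r -> l <= w1 <= r -> (u = l \/ u = r) -> ((0 < l /\ w = l.-1) \/ w = r.+1) ->
  ~~ lcross (u1, w1) (u, w) && ~~ lcross (u, w) (u1, w1).
Proof. rewrite /lcross /=; lia. Qed.

Lemma lcross_self e : ~~ lcross e e.
Proof. rewrite /lcross; lia. Qed.

Lemma lcross_sym e f : lcross e f = lcross f e.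
Proof. rewrite /lcross; lia. Qed.

Section Lab.
Variable n : nat.
Hypothesis hn : 0 < n.
Definition lab (v : nat) : 'I_n := Ordinal (ltn_pmod v hn).

Lemma set2_eq (x y a b : 'I_n) : [set x; y] = [set a; b] -> a != b ->
  (x = a /\ y = b) \/ (x = b /\ y = a).
Proof.
move=> E nab.
have ha : a \in [set x; y] by rewrite E !inE eqxx.
have hb : b \in [set x; y] by rewrite E !inE eqxx orbT.
have hx : x \in [set a; b] by rewrite -E !inE eqxx.
have hy : y \in [set a; b] by rewrite -E !inE eqxx orbT.
move: ha hb hx hy; rewrite !inE.
case/orP=> /eqP ha; case/orP=> /eqP hb; case/orP=> /eqP hx; case/orP=> /eqP hy; subst;
  try by [left|right]; by rewrite eqxx in nab.
Qed.

Lemma mod2 u : u < n.*2 -> (u %% n = u /\ u < n) \/ (u %% n = u - n /\ n <= u).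
Proof.
move=> h; case: (ltnP u n) => hu.
  by left; rewrite modn_small.
right; split=> //.
have -> : u = 1 * n + (u - n) by rewrite mul1n subnKC.
by rewrite modnMDl modn_small; [rewrite mul1n addKn | lia].
Qed.

Lemma lcross_core c u1 w1 u2 w2 :
  c <= u1 < c + n -> c <= w1 < c + n -> c <= u2 < c + n -> c <= w2 < c + n ->
  c <= n -> lab u1 < lab u2 -> lab u2 < lab w1 -> lab w1 < lab w2 -> lcross (u1,w1) (u2,w2).
Proof.
move=> h1 h2 h3 h4 hc /=.
have m1 : u1 < n.*2 by lia.
have m2 : w1 < n.*2 by lia.
have m3 : u2 < n.*2 by lia.
have m4 : w2 < n.*2 by lia.
case: (mod2 m1) => [[-> ?]|[-> ?]]; case: (mod2 m2) => [[-> ?]|[-> ?]];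
case: (mod2 m3) => [[-> ?]|[-> ?]]; case: (mod2 m4) => [[-> ?]|[-> ?]];
 rewrite /lcross /=; lia.
Qed.

Lemma lcross_swl u w f : lcross (u, w) f = lcross (w, u) f.
Proof. rewrite /lcross /=; lia. Qed.
Lemma lcross_swr u w e : lcross e (u, w) = lcross e (w, u).
Proof. rewrite /lcross /=; lia. Qed.

Lemma cross1_lab c u1 w1 u2 w2 :
  c <= u1 < c + n -> c <= w1 < c + n -> c <= u2 < c + n -> c <= w2 < c + n ->
  c <= n ->
  ~~ lcross (u1, w1) (u2, w2) ->
  ~~ cross1 [set lab u1; lab w1] [set lab u2; lab w2].
Proof.
move=> h1 h2 h3 h4 hc hl.
apply/negP=> /existsP[a /existsP[b /existsP[c' /existsP[d /and5P[E1 E2 ac cb bd]]]]].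
have nab : a != b by rewrite neq_ltn (ltn_trans ac cb).
have ncd : c' != d by rewrite neq_ltn (ltn_trans cb bd).
have := set2_eq (eqP E1) nab; have := set2_eq (eqP E2) ncd.
move=> [[e1 e2]|[e1 e2]] [[e3 e4]|[e3 e4]]; subst; move/negP: hl; apply.
- by apply: (lcross_core (c:=c)).
- by rewrite lcross_swl; apply: (lcross_core (c:=c)).
- by rewrite lcross_swr; apply: (lcross_core (c:=c)).
- by rewrite lcross_swr lcross_swl; apply: (lcross_core (c:=c)).
Qed.

Lemma cross_lab c u1 w1 u2 w2 :
  c <= u1 < c + n -> c <= w1 < c + n -> c <= u2 < c + n -> c <= w2 < c + n ->
  c <= n ->
  ~~ lcross (u1, w1) (u2, w2) ->
  ~~ cross [set lab u1; lab w1] [set lab u2; lab w2].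
Proof.
move=> h1 h2 h3 h4 hc hl; rewrite /cross negb_or.
rewrite (cross1_lab h1 h2 h3 h4 hc hl) /=.
by apply: (cross1_lab h3 h4 h1 h2 hc); rewrite lcross_sym.
Qed.

End Lab.

Definition stT := (nat * nat * bool)%type.
Definition cur (s : stT) : nat := if s.2 then s.1.2 else s.1.1.
Definition nxt (s : stT) (mv : bool) : nat := if mv then s.1.2.+1 else s.1.1.-1.
Definition stp (s : stT) (mv : bool) : stT :=
  if mv then (s.1.1, s.1.2.+1, true) else (s.1.1.-1, s.1.2, false).
Fixpoint verts (s : stT) (ms : seq bool) : seq nat :=
  if ms is mv :: ms' then nxt s mv :: verts (stp s mv) ms' else [::].
Fixpoint fin (s : stT) (ms : seq bool) : stT :=
  if ms is mv :: ms' then fin (stp s mv) ms' else s.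
Fixpoint ledges (s : stT) (ms : seq bool) : seq (nat * nat) :=
  if ms is mv :: ms' then (cur s, nxt s mv) :: ledges (stp s mv) ms' else [::].
Fixpoint noz (s : stT) (ms : seq bool) : bool :=
  if ms is mv :: ms' then (mv || (0 < s.1.1)) && noz (stp s mv) ms' else true.

Arguments cur : simpl never.
Arguments nxt : simpl never.
Arguments stp : simpl never.

Lemma cur_stp s mv : cur (stp s mv) = nxt s mv.
Proof. by case: mv; rewrite /cur /nxt /stp. Qed.

Lemma size_verts s ms : size (verts s ms) = size ms.
Proof. by elim: ms s => //= mv ms IH s; rewrite IH. Qed.

Lemma fin_cat s ms1 ms2 : fin s (ms1 ++ ms2) = fin (fin s ms1) ms2.
Proof. by elim: ms1 s => //= mv ms IH s; rewrite IH. Qed.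

Lemma noz_cat s ms1 ms2 : noz s (ms1 ++ ms2) = noz s ms1 && noz (fin s ms1) ms2.
Proof. by elim: ms1 s => //= mv ms IH s; rewrite IH andbA. Qed.

Lemma fin_bounds s ms : noz s ms -> s.1.1 <= s.1.2 ->
  [/\ (fin s ms).1.1 <= s.1.1, s.1.2 <= (fin s ms).1.2 &
      (fin s ms).1.2 - (fin s ms).1.1 = s.1.2 - s.1.1 + size ms].
Proof.
elim: ms s => [|mv ms IH] [[L R] b] /=; first by move=> _ _; rewrite addn0.
case/andP=> h0 hn hLR.
have hLR' : (stp (L, R, b) mv).1.1 <= (stp (L, R, b) mv).1.2 by case: mv h0 {hn} => /=; lia.
have [] := IH _ hn hLR'.
by case: mv h0 {hn hLR'} => /= h0 h1 h2 h3; split; lia.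
Qed.

Lemma verts_prop s ms : noz s ms -> s.1.1 <= s.1.2 ->
  all (fun v => ((fin s ms).1.1 <= v <= (fin s ms).1.2) && ((v < s.1.1) || (s.1.2 < v)))
      (verts s ms) && uniq (verts s ms).
Proof.
elim: ms s => [|mv ms IH] [[L R] b] //=.
case/andP=> h0 hn hLR.
have hLR' : (stp (L, R, b) mv).1.1 <= (stp (L, R, b) mv).1.2 by rewrite /stp /nxt; case: (mv) h0 => /=; lia.
have hs' : ((stp (L, R, b) mv).1.1 = L /\ (stp (L, R, b) mv).1.2 = R.+1 /\ nxt (L, R, b) mv = R.+1) \/
           ((stp (L, R, b) mv).1.1 = L.-1 /\ (stp (L, R, b) mv).1.2 = R /\ nxt (L, R, b) mv = L.-1 /\ 0 < L).
  by rewrite /stp /nxt; case: (mv) h0 => /= h0; [left|right].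
have [b1 b2 b3] := fin_bounds hn hLR'.
case/andP: (IH _ hn hLR') => /allP Ha Hu.
apply/andP; split; last first.
  rewrite Hu andbT; apply/negP=> /Ha /andP[_]; lia.
apply/andP; split; first lia.
apply/allP=> v /Ha /andP[->]; lia.
Qed.

Lemma ledges_prop s ms : noz s ms -> s.1.1 <= s.1.2 ->
  all (fun e => [&& (fin s ms).1.1 <= e.1 <= (fin s ms).1.2,
                    (fin s ms).1.1 <= e.2 <= (fin s ms).1.2 & e.1 != e.2]) (ledges s ms).
Proof.
elim: ms s => [|mv ms IH] [[L R] b] //=.
case/andP=> h0 hn hLR.
have hLR' : (stp (L, R, b) mv).1.1 <= (stp (L, R, b) mv).1.2 by rewrite /stp /nxt; case: (mv) h0 => /=; lia.
have hs' : ((stp (L, R, b) mv).1.1 = L /\ (stp (L, R, b) mv).1.2 = R.+1 /\ nxt (L, R, b) mv = R.+1) \/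
           ((stp (L, R, b) mv).1.1 = L.-1 /\ (stp (L, R, b) mv).1.2 = R /\ nxt (L, R, b) mv = L.-1 /\ 0 < L).
  by rewrite /stp /nxt; case: (mv) h0 => /= h0; [left|right].
have hcur : L <= cur (L, R, b) <= R by rewrite /cur; case: (b) => /=; lia.
have [b1 b2 b3] := fin_bounds hn hLR'.
rewrite (IH _ hn hLR') andbT; lia.
Qed.

Lemma ledges_nc s ms : noz s ms -> s.1.1 <= s.1.2 ->
  {in ledges s ms &, forall e f, ~~ lcross e f} /\
  (forall f, s.1.1 <= f.1 <= s.1.2 -> s.1.1 <= f.2 <= s.1.2 ->
     {in ledges s ms, forall e, ~~ lcross e f}).
Proof.
elim: ms s => [|mv ms IH] [[L R] b] //=.
case/andP=> h0 hn hLR.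
have hLR' : (stp (L, R, b) mv).1.1 <= (stp (L, R, b) mv).1.2 by rewrite /stp /nxt; case: (mv) h0 => /=; lia.
have hs' : ((stp (L, R, b) mv).1.1 = L /\ (stp (L, R, b) mv).1.2 = R.+1 /\ nxt (L, R, b) mv = R.+1) \/
           ((stp (L, R, b) mv).1.1 = L.-1 /\ (stp (L, R, b) mv).1.2 = R /\ nxt (L, R, b) mv = L.-1 /\ 0 < L).
  by rewrite /stp /nxt; case: (mv) h0 => /= h0; [left|right].
have [IH1 IH2] := IH _ hn hLR'.
have hcur : cur (L, R, b) = L \/ cur (L, R, b) = R by rewrite /cur; case: (b) => /=; [right|left].
have e0f : forall f, L <= f.1 <= R -> L <= f.2 <= R ->
    ~~ lcross (cur (L, R, b), nxt (L, R, b) mv) f && ~~ lcross f (cur (L, R, b), nxt (L, R, b) mv).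
  move=> [f1 f2] /= hf1 hf2.
  have := @lcross_hull L R f1 f2 (cur (L, R, b)) (nxt (L, R, b) mv) hf1 hf2 hcur.
  rewrite andbC; apply.
  case: hs' => [[_ [_ ->]]|[_ [_ [-> ?]]]]; [by right|by left].
split.
  move=> e f; rewrite !inE => /orP[/eqP->|He] /orP[/eqP->|Hf].
  - by rewrite lcross_self.
  - rewrite lcross_sym; apply: IH2 => //=; lia.
  - apply: IH2 => //=; lia.
  - by apply: IH1.
move=> f hf1 hf2 e; rewrite inE => /orP[/eqP->|He].
  by case/andP: (e0f f hf1 hf2).
apply: IH2 => //; lia.
Qed.

Section SHP.
Variable n : nat.
Hypothesis hn : 0 < n.
Local Notation lab := (lab hn).

Lemma path_edges_lab s ms :
  path_edges (map lab (cur s :: verts s ms)) =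
  map (fun e => [set lab e.1; lab e.2]) (ledges s ms).
Proof.
elim: ms s => [|mv ms IH] s //=.
by rewrite -IH cur_stp.
Qed.

Lemma lab_inj c x y : c <= x < c + n -> c <= y < c + n -> c <= n -> lab x = lab y -> x = y.
Proof.
move=> hx hy hc /(congr1 val) /=.
have m1 : x < n.*2 by lia.
have m2 : y < n.*2 by lia.
case: (mod2 hn m1) => [[-> ?]|[-> ?]]; case: (mod2 hn m2) => [[-> ?]|[-> ?]]; lia.
Qed.

Theorem shp_of v ms : noz (v, v, true) ms -> size ms = n.-1 ->
  (fin (v, v, true) ms).1.1 <= n ->
  is_SHP (map lab (v :: verts (v, v, true) ms)).
Proof.
move=> hz hs hc.
have hvv : (v, v, true).1.1 <= (v, v, true).1.2 by [].
have [b1 b2 b3] := fin_bounds hz hvv.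
move: b1 b2 b3 hc; set L := (fin _ _).1.1; set R := (fin _ _).1.2 => /= b1 b2 b3 hc.
have hR : R = L + n - 1 by rewrite hs in b3; lia.
case/andP: (verts_prop hz hvv) => /allP Hv Hu.
have Hin : forall x, x \in v :: verts (v, v, true) ms -> L <= x < L + n.
  move=> x; rewrite inE => /orP[/eqP->|/Hv /andP[+ _]]; lia.
apply/and3P; split.
- rewrite -[_ :: map _ _]/(map lab (v :: _)) map_inj_in_uniq.
    rewrite /= Hu andbT; apply/negP=> /Hv /andP[_] /=; lia.
  by move=> x y /Hin hx /Hin hy; apply: (lab_inj hx hy).
- by rewrite /= size_map size_verts hs; apply/eqP; lia.
have -> : v = cur (v, v, true) by [].
rewrite path_edges_lab.
have Hl := ledges_prop hz hvv.
have [Hnc _] := ledges_nc hz hvv.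
apply/allP=> e /mapP[[e1 e2] He ->]; apply/allP=> f /mapP[[f1 f2] Hf ->].
have /and3P[he1 he2 _] := allP Hl _ He.
have /and3P[hf1 hf2 _] := allP Hl _ Hf.
move: he1 he2 hf1 hf2; rewrite -/L -/R /= => he1 he2 hf1 hf2.
apply: (@cross_lab n hn L) => //=; try lia.
exact: (Hnc _ _ He Hf).
Qed.
End SHP.

Lemma ledges_cat s ms1 ms2 :
  ledges s (ms1 ++ ms2) = ledges s ms1 ++ ledges (fin s ms1) ms2.
Proof. by elim: ms1 s => //= mv ms IH s; rewrite IH. Qed.

Lemma walkR_fin L R w : fin (L, R, true) (nseq w true) = (L, R + w, true).
Proof.
elim: w R => [|w IH] R /=; first by rewrite addn0.
by rewrite /stp /= IH addSnnS.
Qed.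

Lemma walkR_ledges L R w :
  ledges (L, R, true) (nseq w true) = [seq (R + j, (R + j).+1) | j <- iota 0 w].
Proof.
elim: w R => [|w IH] R //=.
rewrite /stp /cur /nxt /= IH addn0; congr (_ :: _).
rewrite -[1]addn0 iotaDl -map_comp; apply: eq_map => j /=; congr (_, _); lia.
Qed.

Lemma walkR_noz L R w : noz (L, R, true) (nseq w true).
Proof. by elim: w R => //= w IH R; rewrite /stp /=. Qed.

Lemma walkL_fin L R k : k <= L -> fin (L, R, false) (nseq k false) = (L - k, R, false).
Proof.
elim: k L => [|k IH] L /=; first by rewrite subn0.
move=> hk; rewrite /stp /= IH; first by congr (_, _, _); lia.
lia.
Qed.

Lemma walkL_ledges L R k : k <= L ->
  ledges (L, R, false) (nseq k false) = [seq (L - j, (L - j).-1) | j <- iota 0 k].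
Proof.
elim: k L => [|k IH] L //= hk.
rewrite /stp /cur /nxt /= IH; last by lia.
rewrite subn0; congr (_ :: _).
rewrite -[1]addn0 iotaDl -map_comp; apply: eq_map => j /=; congr (_, _); lia.
Qed.

Lemma walkL_noz L R k : k <= L -> noz (L, R, false) (nseq k false).
Proof.
elim: k L => [|k IH] L //= hk.
rewrite /stp /=; apply/andP; split; first lia.
apply: IH; lia.
Qed.

Lemma arA2 n m al be i z y s : n = 2 * m - 1 -> i < m -> al <= i <= be -> be < m -> al < z <= be ->
  be.+2 <= y -> y < al + n -> be.*2 <= z + y -> z + y <= al.*2 + n + 2 ->
  ((s = z + y /\ z + y < n) \/ (s = z + y - n /\ n <= z + y)) ->
  s = (if 2 * i + 1 < n then 2 * i + 1 else 0) -> i = be \/ i = al.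
Proof. case: ifP => ? *; lia. Qed.

Lemma arA1 n m al be i z1 z2 : n = 2 * m - 1 -> i < m -> (i < al) || (be < i) -> be < m ->
  al < z1 <= be -> al < z2 <= be -> z1 != z2 ->
  z1 + z2 = (if 2 * i + 1 < n then 2 * i + 1 else 0) -> False.
Proof. case: ifP => ? *; lia. Qed.

Lemma npts_gt0 m : 0 < m -> 0 < npts m.
Proof. rewrite /npts; lia. Qed.

Section Main.
Variables (m : nat) (B : {set {set 'I_(npts m)}}).
Hypothesis hm : 0 < m.
Local Notation n := (npts m).
Let hn : 0 < n := npts_gt0 hm.
Local Notation lab := (lab hn).

Lemma nval : n = (2 * m).-1. Proof. by []. Qed.
Lemma nv : n = 2 * m - 1. Proof. rewrite nval; lia. Qed.
Ltac nlia := have ? := nv; lia.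

Lemma lab_val u : val (lab u) = u %% n. Proof. by []. Qed.

Lemma bd_lab u : bd n u = [set lab u; lab u.+1].
Proof.
by apply/setP=> x; rewrite !inE -!val_eqE /=.
Qed.

Lemma dir2 u w : u %% n != w %% n -> direction [set lab u; lab w] = (u + w) %% n.
Proof.
move=> h; rewrite /direction.
have hne : lab u \notin [set lab w] by rewrite inE -val_eqE /=.
rewrite [[set lab u; lab w]]/(setU _ _) big_setU1 //= big_set1 /= modnDm //.
Qed.

Lemma card2_eq (E : {set 'I_n}) p q : #|E| = 2 -> p \in E -> q \in E -> p != q -> E = [set p; q].
Proof.
move=> hE hp hq hpq; apply/eqP; rewrite eq_sym eqEcard hE cards2 hpq andbT.
by apply/subsetP=> x; rewrite !inE => /orP[/eqP->|/eqP->].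
Qed.


Hypothesis hedge : forall e, e \in B -> #|e| = 2.
Hypothesis hdir1 : forall i, i < m -> #|[set e in B | direction e == (2 * i + 1) %% n]| = 1.
Hypothesis hdir2 : forall e, e \in B -> exists2 i, i < m & direction e = (2 * i + 1) %% n.
Variables al be a b : nat.
Hypothesis hab : [/\ al < a, a < b, b < be & be < m].
Hypothesis hfirst : bd n al \in B.
Hypothesis hfirst_min : forall i, i < al -> bd n i \notin B.
Hypothesis hlast : bd n be \in B.
Hypothesis hlast_max : forall i, be < i -> i < m -> bd n i \notin B.
Hypothesis ha : bd n a \notin B.
Hypothesis hb : bd n b \notin B.

Lemma uniqdir E1 E2 i : E1 \in B -> E2 \in B -> i < m ->
  direction E1 = (2 * i + 1) %% n -> direction E2 = (2 * i + 1) %% n -> E1 = E2.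
Proof.
move=> h1 h2 hi d1 d2.
have /cards1P[E hE] : #|[set e in B | direction e == (2 * i + 1) %% n]| == 1 by rewrite hdir1.
have : E1 \in [set e in B | direction e == (2 * i + 1) %% n] by rewrite inE h1 d1 eqxx.
have : E2 \in [set e in B | direction e == (2 * i + 1) %% n] by rewrite inE h2 d2 eqxx.
by rewrite hE !inE => /eqP-> /eqP->.
Qed.

Lemma safebd y : be < y -> y < al + n -> [set lab y; lab y.+1] \notin B.
Proof.
move=> h1 h2; case: hab => h3 h4 h5 h6.
case: (ltnP y m) => hym.
  by rewrite -bd_lab; apply: hlast_max.
case: (ltnP y n) => hyn.
  apply/negP=> hE; have [i hi] := hdir2 hE.
  have hne : y %% n != y.+1 %% n.
    rewrite modn_small // ; case: (ltnP y.+1 n) => h7.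
      by rewrite modn_small // neq_ltn ltnSn.
    have -> : y.+1 = n by lia.
    by rewrite modnn; apply/eqP; lia.
  rewrite dir2 // => hd.
  have e1 : (y + y.+1) %% n = y + y.+1 - n.
    have ht : y + y.+1 = 1 * n + (y + y.+1 - n) by nlia.
    by rewrite {1}ht modnMDl modn_small //; nlia.
  have e2 : (2 * i + 1) %% n = if 2 * i + 1 < n then 2 * i + 1 else 0.
    case: ifP => hh; first by rewrite modn_small.
    have -> : 2 * i + 1 = n by nlia.
    by rewrite modnn.
  move: hd; rewrite e1 e2; case: ifP; nlia.
have -> : [set lab y; lab y.+1] = bd n (y - n).
  have e : y = (y - n) + n by rewrite subnK.
  rewrite bd_lab; congr [set _; _]; apply: val_inj => /=.
    by rewrite {1}e modnDr.
  by rewrite {1}e -addSn modnDr.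
by apply: hfirst_min; lia.
Qed.


Lemma hm4 : 4 <= m.
Proof. case: hab; lia. Qed.

Lemma mod2i i : i < m -> (2 * i + 1) %% n = if 2 * i + 1 < n then 2 * i + 1 else 0.
Proof.
move=> hi; case: ifP => hh; first by rewrite modn_small.
have -> : 2 * i + 1 = n by nlia.
by rewrite modnn.
Qed.

Lemma modsm u : u < n -> u %% n = u.
Proof. by move=> h; rewrite modn_small. Qed.

Lemma mod2n u : u < n.*2 -> (u %% n = u /\ u < n) \/ (u %% n = u - n /\ n <= u).
Proof. exact: (mod2 hn). Qed.

Lemma dir_bd i : i < m -> direction (bd n i) = (2 * i + 1) %% n.
Proof.
move=> hi; have := hm4 => h4.
rewrite bd_lab dir2; first by congr (_ %% _); lia.
rewrite !modsm; [by rewrite neq_ltn ltnSn| nlia | nlia].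
Qed.

Definition outside (E : {set 'I_n}) : bool :=
  [exists i : 'I_m, ((i < al) || (be < i)) && (direction E == (2 * i + 1) %% n)].

Lemma outZ E z1 z2 : E \in B -> outside E -> al < z1 <= be -> al < z2 <= be ->
  lab z1 \in E -> lab z2 \in E -> z1 = z2.
Proof.
move=> hE /existsP[i /andP[hi /eqP hd]] h1 h2 e1 e2.
have h4 := hm4; have [hh1 hh2 hh3 hh4] := hab; have nn := nv.
apply/eqP/negPn/negP => hne.
have z1n : z1 < n by clear -nn h1 hh4; lia.
have z2n : z2 < n by clear -nn h2 hh4; lia.
have z12n : z1 + z2 < n by clear -nn h1 h2 hh4; lia.
have hl : lab z1 != lab z2 by rewrite -val_eqE /= !modsm.
have EE := card2_eq (hedge hE) e1 e2 hl.
move: hd; rewrite EE dir2; last by rewrite !modsm.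
rewrite modsm // mod2i //; apply: (arA1 nn (ltn_ord i) hi hh4 h1 h2).
by apply: contra hl => /eqP->.
Qed.

Lemma lab_ne_bd j y : j < m -> (j = be \/ j = al) -> be.+2 <= y -> y < al + n ->
  lab y \notin bd n j.
Proof.
move=> hj hj' hy1 hy2.
have h4 := hm4; have [hh1 hh2 hh3 hh4] := hab; have nn := nv.
have jn : j < n by clear -nn hj; lia.
have j1n : j.+1 < n by clear -nn hj h4; lia.
have my : y < n.*2 by clear -nn hy2 hh1 hh2 hh3 hh4; lia.
rewrite bd_lab !inE -!val_eqE /= (modsm jn) (modsm j1n).
case: (mod2n my) => [[-> hc]|[-> hc]]; clear -hj' hy1 hy2 hh1 hh2 hh3 nn hc; lia.
Qed.

Lemma cls E z y : E \in B -> lab z \in E -> lab y \in E -> al < z <= be ->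
  be.+2 <= y -> y < al + n -> be.*2 <= z + y -> z + y <= al.*2 + n + 2 -> outside E.
Proof.
move=> hE ez ey hz hy1 hy2 hs1 hs2.
have h4 := hm4; have [hh1 hh2 hh3 hh4] := hab; have nn := nv.
have my : y < n.*2 by clear -nn hy2 hh1 hh2 hh3 hh4; lia.
have zn : z < n by clear -nn hz hh4; lia.
have hzn : z %% n = z by rewrite modsm.
have hyz : y %% n != z.
  by case: (mod2n my) => [[-> ?]|[-> ?]]; clear -hz hy1 hy2 nn; lia.
have hl : lab z != lab y by rewrite -val_eqE /= hzn eq_sym.
have EE := card2_eq (hedge hE) ez ey hl.
have dE : direction E = (z + y) %% n by rewrite EE dir2 // hzn eq_sym.
have [i hi hd] := hdir2 hE.
case: (boolP ((i < al) || (be < i))) => hout.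
  by apply/existsP; exists (Ordinal hi); rewrite hout /= hd eqxx.
have ms : z + y < n.*2 by clear -nn hs2 hh1 hh2 hh3 hh4; lia.
have hzy : (z + y) %% n = (2 * i + 1) %% n by rewrite -dE -hd.
have hib : al <= i <= be by move: hout; rewrite negb_or -!leqNgt => /andP[-> ->].
have hcase : i = be \/ i = al.
  by move: hzy; rewrite mod2i //; apply: (arA2 nn hi hib hh4 hz hy1 hy2 hs1 hs2 (mod2n ms)).
have hjm : forall j, j = be \/ j = al -> j < m.
  by move=> j [->|->] //; clear -hh1 hh2 hh3 hh4; lia.
have hj : forall j, (j = be \/ j = al) -> i = j -> False.
  move=> j hj' hij; have jm := hjm j hj'.
  have EB : E = bd n j.
    apply: (uniqdir hE _ jm (etrans hd _) (dir_bd jm)); last by rewrite hij.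
    by case: hj' => ->.
  by move: ey; rewrite EB; apply/negP; apply: lab_ne_bd.
by case: hcase => hc; [case: (hj be (or_introl erefl) hc) | case: (hj al (or_intror erefl) hc)].
Qed.


Definition Oset (z : nat) : {set {set 'I_n}} := [set E in B | outside E && (lab z \in E)].
Definition Sset (y : nat) : {set {set 'I_n}} :=
  [set E in B | outside E && [exists z : 'I_n, (y <= z <= be) && (z \in E)]].
Definition Ncnt y := #|Sset y|.

Lemma lab_ord (z : 'I_n) : lab z = z.
Proof. by apply: val_inj; rewrite /= modsm. Qed.

Lemma N_top : Ncnt be.+1 = 0.
Proof.
apply/eqP; rewrite cards_eq0; apply/eqP/setP=> E; rewrite !inE.
apply/negP=> /and3P[_ _ /existsP[z /andP[hz _]]]; move: hz; clear; lia.
Qed.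

Lemma N_step x y : al < y -> y <= x -> x <= be -> Ncnt x.+1 + #|Oset x :|: Oset y| <= Ncnt y.
Proof.
move=> h1 h2 h3.
have dis : Sset x.+1 :&: (Oset x :|: Oset y) = set0.
  apply/setP=> E; rewrite !inE.
  apply/negP=> /andP[/and3P[hE ho /existsP[z /andP[hz hzE]]] hO].
  have hzE' : lab z \in E by rewrite lab_ord.
  have hz' : al < z <= be by move: hz h1 h2; clear; lia.
  case/orP: hO => /and3P[_ _ hx].
  - have := outZ hE ho _ hz' hx hzE'. 
    have : al < x <= be by move: h1 h2 h3; clear; lia.
    move=> hh /(_ hh) e; move: hz; rewrite -e; clear; lia.
  - have := outZ hE ho _ hz' hx hzE'. 
    have : al < y <= be by move: h1 h2 h3; clear; lia.
    move=> hh /(_ hh) e; move: hz h2; rewrite -e; clear; lia.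
rewrite /Ncnt -[#|Sset x.+1| + _]subn0 -(cards0 {set 'I_n}) -dis -cardsU.
apply: subset_leq_card; apply/subsetP=> E; rewrite !inE.
case/orP=> [/and3P[-> -> /existsP[z /andP[hz hzE]]]|/orP[] /and3P[-> -> hE]] /=.
- by apply/existsP; exists z; rewrite hzE andbT; move: hz h2; clear; lia.
- by apply/existsP; exists (lab x); rewrite hE andbT /= modsm; case: hab => _ _ _ hbm; move: h1 h2 h3 (nv) (hm4) hbm; clear; lia.
- by apply/existsP; exists (lab y); rewrite hE andbT /= modsm; case: hab => _ _ _ hbm; move: h1 h2 h3 (nv) (hm4) hbm; clear; lia.
Qed.


Lemma N_max : Ncnt al.+1 <= al + (m - 1 - be).
Proof.
have [hh1 hh2 hh3 hh4] := hab.
set X := [set i : 'I_m | (i < al) || (be < i)].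
pose g (E : {set 'I_n}) : 'I_m :=
  if [pick i : 'I_m | ((i < al) || (be < i)) && (direction E == (2 * i + 1) %% n)] is Some i
  then i else Ordinal hm.
have gP : forall E, outside E ->
    ((g E < al) || (be < g E)) && (direction E == (2 * g E + 1) %% n).
  move=> E /existsP hE; rewrite /g; case: pickP => [i -> //|h0].
  by case: hE => i; rewrite h0.
have h1 : #|Sset al.+1| <= #|X|.
  rewrite -(card_in_imset (f := g) (D := mem (Sset al.+1))).
    apply: subset_leq_card; apply/subsetP => i /imsetP[E]; rewrite inE.
    case/and3P=> _ ho _ ->; rewrite inE.
    by case/andP: (gP E ho).
  move=> E1 E2; rewrite !inE => /and3P[hE1 ho1 _] /and3P[hE2 ho2 _] hg.
  case/andP: (gP E1 ho1) => _ /eqP d1; case/andP: (gP E2 ho2) => _ /eqP d2.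
  by apply: (uniqdir hE1 hE2 (ltn_ord (g E1)) d1); rewrite hg.
have cX : #|X| + #|~: X| = m by rewrite cardsC card_ord.
have hinj : forall j : 'I_(be - al).+1, al + j < m.
  by move=> j; have := ltn_ord j; move: hh1 hh2 hh3 hh4; clear; lia.
pose h (j : 'I_(be - al).+1) : 'I_m := Ordinal (hinj j).
have hi : injective h by move=> j1 j2 /(congr1 val) /= /addnI /val_inj.
have cC : (be - al).+1 <= #|~: X|.
  rewrite -{1}(card_ord (be - al).+1) -cardsT -(card_imset _ hi).
  apply: subset_leq_card; apply/subsetP => i /imsetP[j _ ->]; rewrite !inE /=.
  by have := ltn_ord j; move: hh1 hh2 hh3 hh4; clear; lia.
rewrite /Ncnt; move: h1 cX cC hh1 hh2 hh3 hh4; clear; lia.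
Qed.


Lemma N_mono y : al < y -> Ncnt y <= Ncnt al.+1.
Proof.
move=> hy; apply: subset_leq_card; apply/subsetP=> E; rewrite !inE.
case/and3P=> -> -> /existsP[z /andP[hz hzE]] /=.
by apply/existsP; exists z; rewrite hzE andbT; move: hz hy; clear; lia.
Qed.

Lemma lab_inj2 u w : lab u = lab w -> u < n.*2 -> w < n.*2 -> u <= w -> w < u + n -> u = w.
Proof.
move=> /(congr1 val) /= e h1 h2 h3 h4; move: e.
case: (mod2n h1) => [[-> c1]|[-> c1]]; case: (mod2n h2) => [[-> c2]|[-> c2]];
  move: h3 h4 c1 c2; clear; lia.
Qed.

Lemma set2_same (p q1 q2 : 'I_n) : [set q1; p] = [set q2; p] -> q1 != p -> q1 = q2.
Proof.
move=> e hne; have : q1 \in [set q2; p] by rewrite -e !inE eqxx.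
by rewrite !inE (negbTE hne) orbF => /eqP.
Qed.

Lemma block_pick x y R :
  al < y -> y <= x -> x <= be -> be.+2 <= R ->
  R + (#|Oset x :|: Oset y|).*2 + 1 < al + n ->
  be.*2 <= y + R ->
  x + R + (#|Oset x :|: Oset y|).*2 + 1 <= al.*2 + n + 2 ->
  (#|Oset x :|: Oset y|).*2 + 1 <= n ->
  exists2 w, w <= (#|Oset x :|: Oset y|).*2 &
    ([set lab (R + w); lab x] \notin B) && ([set lab y; lab (R + w).+1] \notin B).
Proof.
set c := #|Oset x :|: Oset y|.
move=> p1 p2 p3 p4 p5 p6 p7 p8.
have nn := nv; have [hh1 hh2 hh3 hh4] := hab.
suff [w hw] : exists w : 'I_c.*2.+1,
    ([set lab (R + w); lab x] \notin B) && ([set lab y; lab (R + w).+1] \notin B).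
  by exists w => //; rewrite -ltnS.
apply/existsP; apply: contraT; rewrite negb_exists => /forallP hall.
pose e1 (w : 'I_c.*2.+1) := [set lab (R + w); lab x].
pose e2 (w : 'I_c.*2.+1) := [set lab y; lab (R + w).+1].
pose f (w : 'I_c.*2.+1) := if e1 w \in B then (e1 w, true) else (e2 w, false).
have wb : forall w : 'I_c.*2.+1, w <= c.*2 by move=> w; rewrite -ltnS.
have bad : forall w : 'I_c.*2.+1, (e1 w \in B) || (e2 w \in B).
  by move=> w; have := hall w; rewrite negb_and !negbK.
have rng : forall w : 'I_c.*2.+1, [/\ be.+2 <= R + w, (R + w).+1 < al + n,
      be.*2 <= x + (R + w), x + (R + w) <= al.*2 + n + 2 &
      be.*2 <= y + (R + w).+1 /\ y + (R + w).+1 <= al.*2 + n + 2].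
  move=> w; have := wb w; move: p1 p2 p3 p4 p5 p6 p7 p8; clear => q1 q2 q3 q4 q5 q6 q7 q8 q9; split; try split; lia.
have hx : al < x <= be by move: p1 p2 p3; clear; lia.
have hy : al < y <= be by move: p1 p2 p3; clear; lia.
have inO : forall w, f w \in setX (Oset x :|: Oset y) [set: bool].
  move=> w; rewrite /f; have [r1 r2 r3 r4 [r5 r6]] := rng w.
  case: ifP => h1; rewrite !inE andbT.
    have o : outside (e1 w).
      apply: (cls h1 (z := x) (y := R + w)); try done.
      - by rewrite /e1 !inE eqxx orbT.
      - by rewrite /e1 !inE eqxx.
      - by move: r2; clear; lia.
    by rewrite /= h1 o /= eqxx orbT.
  have h2 : e2 w \in B by have := bad w; rewrite h1.
  have o : outside (e2 w).
    apply: (cls h2 (z := y) (y := (R + w).+1)); try done.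
    - by rewrite /e2 !inE eqxx.
    - by rewrite /e2 !inE eqxx orbT.
    - by move: r1; clear; lia.
  by rewrite /= h2 o /= eqxx /= orbT.
have labne : forall u v, al < u <= be -> be.+2 <= v -> v < al + n -> lab v != lab u.
  move=> u v hu hv1 hv2; rewrite -val_eqE /= (modsm (_ : u < n)); last by move: hu hh4 nn; clear; lia.
  have mv : v < n.*2 by move: hv2 hh1 hh2 hh3 hh4 nn; clear; lia.
  by case: (mod2n mv) => [[-> ?]|[-> ?]]; move: hu hv1 hv2 nn; clear; lia.
have finj : injective f.
  move=> w1 w2; rewrite /f; have [r1 r2 _ _ _] := rng w1; have [s1 s2 _ _ _] := rng w2.
  have W1 := wb w1; have W2 := wb w2.
  have key : forall u1 u2 : 'I_c.*2.+1, u1 <= u2 -> lab (R + u1) = lab (R + u2) -> u1 = u2.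
    move=> u1 u2 hu e; apply: ord_inj; have [q1 q2 _ _ _] := rng u1; have [t1 t2 _ _ _] := rng u2.
    have := wb u1; have := wb u2 => b1 b2.
    have := lab_inj2 e; move: q2 t2 hu b1 b2 p8 nn hh1 hh2 hh3 hh4; clear; lia.
  have keyS : forall u1 u2 : 'I_c.*2.+1, u1 <= u2 -> lab (R + u1).+1 = lab (R + u2).+1 -> u1 = u2.
    move=> u1 u2 hu e; apply: ord_inj; have [q1 q2 _ _ _] := rng u1; have [t1 t2 _ _ _] := rng u2.
    have := wb u1; have := wb u2 => b1 b2.
    have := lab_inj2 e; move: q2 t2 hu b1 b2 p8 nn hh1 hh2 hh3 hh4; clear; lia.
  have key2 : forall u1 u2 : 'I_c.*2.+1, lab (R + u1) = lab (R + u2) -> u1 = u2.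
    move=> u1 u2 e; case: (leqP u1 u2) => h; first by apply: key.
    by apply/esym/key => //; apply: ltnW.
  have keyS2 : forall u1 u2 : 'I_c.*2.+1, lab (R + u1).+1 = lab (R + u2).+1 -> u1 = u2.
    move=> u1 u2 e; case: (leqP u1 u2) => h; first by apply: keyS.
    by apply/esym/keyS => //; apply: ltnW.
  case: ifP => h1; case: ifP => h2 [] // E.
    apply: key2; apply: (set2_same E); apply: labne => //.
    by move: r2; clear; lia.
  apply: keyS2; move: E; rewrite /e2 (setUC [set lab y]) (setUC [set lab y]) => E.
  apply: (set2_same E); apply: labne => //; move: r1 r2; clear; lia.
have sub : f @: setT \subset setX (Oset x :|: Oset y) [set: bool].
  by apply/subsetP => p /imsetP[w _ ->]; exact: inO.
have := subset_leq_card sub.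
rewrite (card_imset _ finj) cardsT card_ord cardsX cardsT card_bool.
by rewrite -/c; clear; lia.
Qed.



Definition hole h := (h == a) || (h == b).

Definition oks s ms := all (fun e => [set lab e.1; lab e.2] \notin B) (ledges s ms).

Lemma oks_cat s ms1 ms2 : oks s (ms1 ++ ms2) = oks s ms1 && oks (fin s ms1) ms2.
Proof. by rewrite /oks ledges_cat all_cat. Qed.


Definition blk w k := nseq w true ++ false :: nseq k false ++ [:: true].

Lemma blk_fin x R w k : k <= x -> fin (x.+1, R, true) (blk w k) = (x - k, (R + w).+1, true).
Proof.
move=> hk; rewrite /blk fin_cat walkR_fin /= {1}/stp /= fin_cat walkL_fin //=.
Qed.

Lemma blk_noz x R w k : k <= x -> noz (x.+1, R, true) (blk w k).
Proof.
move=> hk; rewrite /blk noz_cat walkR_noz walkR_fin /= {1}/stp /= noz_cat walkL_noz //=.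
Qed.

Lemma blk_oks x R w k : k <= x -> x - k > 0 ->
  (forall j, j < w -> [set lab (R + j); lab (R + j).+1] \notin B) ->
  [set lab (R + w); lab x] \notin B ->
  (forall j, j < k -> hole (x - j).-1) ->
  [set lab (x - k); lab (R + w).+1] \notin B ->
  oks (x.+1, R, true) (blk w k).
Proof.
move=> hk hk0 hw hj hh hr.
have e : stp (x.+1, R + w, true) false = (x, R + w, false) by [].
rewrite /blk /oks ledges_cat walkR_ledges walkR_fin [ledges _ (false :: _)]/= e.
rewrite ledges_cat walkL_ledges // walkL_fin //= /cur /nxt /=.
rewrite all_cat /= all_cat /= hj hr /= !andbT.
apply/andP; split.
- apply/allP=> e' /mapP[j]; rewrite mem_iota add0n => hjw ->; exact: hw.
- apply/allP=> e' /mapP[j]; rewrite mem_iota add0n => hjk -> /=.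
  have hjx : 0 < x - j by move: hjk hk hk0; clear; lia.
  have := hh j hjk; rewrite /hole => /orP[] /eqP e1.
  + by rewrite setUC -[x - j](prednK hjx) e1 -bd_lab.
  + by rewrite setUC -[x - j](prednK hjx) e1 -bd_lab.
Qed.


Lemma step x R W k :
  al < x - k -> k <= 2 -> W + k <= 2 -> al + 3 <= x + W -> x <= be -> be.+2 <= R ->
  be.*2.+2 <= x + R + W -> x + R + W <= be.*2.+2 + (Ncnt x.+1).*2 ->
  (forall j, j < k -> hole (x - j).-1) ->
  exists w, [/\ oks (x.+1, R, true) (blk w k), noz (x.+1, R, true) (blk w k),
     fin (x.+1, R, true) (blk w k) = (x - k, (R + w).+1, true),
     x + R + w + W <= be.*2.+2 + (Ncnt (x - k)).*2 &
     (R + w).+1 < al + n].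
Proof.
move=> q1 q2 q3 q4 q5 q6 q7 q8 hh.
have [h1 h2 h3 h4] := hab; have nn := nv.
have y1 : al < x - k by [].
have y2 : x - k <= x by apply: leq_subr.
have Nst := N_step y1 y2 q5.
have Nm := N_mono y1.
have Nx := N_max.
set c := #|Oset x :|: Oset (x - k)| in Nst *.
have p5 : R + c.*2 + 1 < al + n.
  by move: Nst Nm Nx q4 q8 nn h1 h2 h3 h4; clear; lia.
have p6 : be.*2 <= x - k + R by move: q7 q3 q1; clear; lia.
have p7 : x + R + c.*2 + 1 <= al.*2 + n + 2.
  by move: Nst Nm Nx q4 q8 nn h1 h2 h3 h4; clear; lia.
have p8 : c.*2 + 1 <= n.
  by move: Nst Nm Nx q4 q8 nn h1 h2 h3 h4 q1 q5; clear; lia.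
have [w hw /andP[g1 g2]] := block_pick y1 y2 q5 q6 p5 p6 p7 p8.
have hkx : k <= x by move: q1; clear; lia.
exists w; split.
- apply: blk_oks => //; first by move: q1; clear; lia.
  move=> j hj; apply: safebd; move: hj hw q6 p5; clear; lia.
- exact: blk_noz.
- exact: blk_fin.
- by move: hw Nst q8; clear; lia.
- by move: hw p5; clear; lia.
Qed.

Lemma sweep x R W : al < x <= be -> be.+2 <= R -> be.*2.+2 <= x + R + W ->
  x + R + W <= be.*2.+2 + (Ncnt x.+1).*2 ->
  ((W = 0 /\ b < x) \/ (W = 1 /\ a < x < b) \/ (W = 2 /\ x < a)) ->
  exists ms, [/\ oks (x.+1, R, true) ms, noz (x.+1, R, true) ms &
                 fin (x.+1, R, true) ms = (al.+1, al + n, true)].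
Proof.
elim/ltn_ind: x R W => x IH R W hx hR hlo hup hW.
have [h1 h2 h3 h4] := hab; have nn := nv.
have [k [k1 k2 k3 k4 k5]] : exists k, [/\ k <= 2, al < x - k, W + k <= 2,
    forall j, j < k -> hole (x - j).-1 &
    (x - k = al.+1 \/ (al.+1 < x - k /\
      ((W + k = 0 /\ b < (x - k).-1) \/ (W + k = 1 /\ a < (x - k).-1 < b) \/
       (W + k = 2 /\ (x - k).-1 < a))))].
  case: (eqVneq x.-1 b) => eb.
    case: (eqVneq x.-2 a) => ea.
      exists 2; split.
      + by [].
      + by move: hW eb ea h1 h2; clear; lia.
      + by move: hW eb ea h1 h2; clear; lia.
      + move=> [|[|j]] // _; rewrite /hole.
          by rewrite subn0 eb eqxx orbT.
        by rewrite subn1 ea eqxx.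
      + by move: hW eb ea h1 h2 hx; clear; lia.
    exists 1; split.
    + by [].
    + by move: hW eb h1 h2; clear; lia.
    + by move: hW eb h1 h2; clear; lia.
    + by move=> [|j] // _; rewrite /hole subn0 eb eqxx orbT.
    + by move: hW eb ea h1 h2 hx; clear; lia.
  case: (eqVneq x.-1 a) => ea.
    exists 1; split.
    + by [].
    + by move: hW ea h1 h2; clear; lia.
    + by move: hW ea eb h1 h2; clear; lia.
    + by move=> [|j] // _; rewrite /hole subn0 ea eqxx.
    + by move: hW eb ea h1 h2 hx; clear; lia.
  exists 0; split.
  + by [].
  + by move: hx; clear; lia.
  + by move: hW; clear; lia.
  + by [].
  + by move: hW eb ea h1 h2 hx; clear; lia.
have k6 : al + 3 <= x + W by move: hW h1 h2 hx; clear; lia.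
case/andP: hx => hx1 hx2.
have [w [o1 o2 o3 o4 o5]] := step k2 k1 k3 k6 hx2 hR hlo hup k4.
case: k5 => [fk|[fk hW']].
  exists (blk w k ++ nseq (al + n - (R + w).+1) true); split.
  - rewrite oks_cat o1 o3 /oks walkR_ledges /=; apply/allP=> e /mapP[j].
    rewrite mem_iota add0n => hj ->; apply: safebd; rewrite /=; move: hj o5 hR; clear; lia.
  - by rewrite noz_cat o2 o3 walkR_noz.
  - rewrite fin_cat o3 walkR_fin fk; congr (_, _, _); move: o5; clear; lia.
have hlt : (x - k).-1 < x by move: k2; clear; lia.
have r1 : al < (x - k).-1 <= be by move: fk hx2; clear; lia.
have r2 : be.+2 <= (R + w).+1 by move: hR; clear; lia.
have r3 : be.*2.+2 <= (x - k).-1 + (R + w).+1 + (W + k) by move: hlo k2 fk; clear; lia.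
have ex : ((x - k).-1).+1 = x - k by move: k2; clear; lia.
have r4 : (x - k).-1 + (R + w).+1 + (W + k) <= be.*2.+2 + (Ncnt ((x - k).-1).+1).*2.
  by rewrite ex; move: o4 k2 fk; clear; lia.
have [ms' [m1 m2 m3]] := IH _ hlt (R + w).+1 (W + k) r1 r2 r3 r4 hW'.
exists (blk w k ++ ms'); split.
- by rewrite oks_cat o1 o3 -ex m1.
- by rewrite noz_cat o2 o3 -ex m2.
- by rewrite fin_cat o3 -ex m3.
Qed.



Lemma no_block : meets_all_SHP B -> False.
Proof.
move=> hmeet.
have [h1 h2 h3 h4] := hab; have nn := nv.
have hx : al < be <= be by move: h1 h2 h3; clear; lia.
have hNn : be + be.+2 + 0 <= be.*2.+2 + (Ncnt be.+1).*2 by clear; lia.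
have hlo0 : be.*2.+2 <= be + be.+2 + 0 by clear; lia.
have [ms [m1 m2 m3]] := sweep hx (leqnn be.+2) hlo0 hNn (or_introl (conj erefl h3)).
pose s0 : stT := (be.+1, be.+1, true).
have e0 : stp s0 true = (be.+1, be.+2, true) by [].
have z0 : noz s0 (true :: ms) by rewrite /= e0 m2.
have f0 : fin s0 (true :: ms) = (al.+1, al + n, true) by rewrite /= e0 m3.
have [_ _ b3] := fin_bounds z0 (leqnn _).
have hs : size (true :: ms) = n.-1.
  by move: b3; rewrite f0 /= => b3; move: b3 nn h1 h2 h3 h4; clear; lia.
have hle : (fin s0 (true :: ms)).1.1 <= n by rewrite f0 /=; move: nn h1 h2 h3 h4; clear; lia.
have hS := shp_of hn z0 hs hle.
have := hmeet _ hS.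
have -> : be.+1 = cur s0 by [].
rewrite path_edges_lab; apply/negP; rewrite -all_predC.
rewrite /= {1}/cur {1}/nxt /=; apply/andP; split.
  by apply: safebd; move: nn h1 h2 h3 h4; clear; lia.
rewrite e0; move: m1; rewrite /oks => /allP hall.
by apply/allP=> e /mapP[e' he' ->] /=; apply: hall.
Qed.

End Main.

Theorem proposition3 (m : nat) (hm : 2 <= m)
  (B : {set {set 'I_(npts m)}})
  (hB : is_blocker B)
  (hdir1 : forall i, i < m ->
     #|[set e in B | direction e == (2 * i + 1) %% npts m]| = 1)
  (hdir2 : forall e, e \in B ->
     exists2 i, i < m & direction e = (2 * i + 1) %% npts m)
  (alpha delta : nat) (halpha : alpha < m) (hdelta : delta < m)
  (hfirst : bd (npts m) alpha \in B)
  (hfirst_min : forall i, i < alpha -> bd (npts m) i \notin B)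
  (hlast : bd (npts m) (m - delta - 1) \in B)
  (hlast_max : forall i, m - delta - 1 < i -> i < m -> bd (npts m) i \notin B) :
  #|[set i : 'I_m | (alpha <= i) && (i < m - delta) && (bd (npts m) i \notin B)]| <= 1.
Proof.
rewrite leqNgt; apply/negP => /card_gt1P[i1 [i2 [hi1 hi2 hne]]].
case: hB => hedge hmeet _.
have hedge' : forall e, e \in B -> #|e| = 2 by move=> e /hedge /eqP.
have hm0 : 0 < m by apply: leq_trans hm.
wlog lt12 : i1 i2 hi1 hi2 hne / i1 < i2.
  move=> H; case: (ltngtP i1 i2) => h.
  - exact: (H i1 i2 hi1 hi2 hne h).
  - by apply: (H i2 i1 hi2 hi1 _ h); rewrite eq_sym.
  - by move: hne; rewrite -val_eqE /= h eqxx.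
move: hi1 hi2; rewrite !inE => /andP[/andP[a1 a2] a3] /andP[/andP[b1 b2] b3].
have hal : alpha < i1.
  rewrite ltn_neqAle a1 andbT; apply/eqP => e; move: a3; rewrite -e hfirst.
  by [].
have hbe : i2 < m - delta - 1.
  rewrite ltn_neqAle; apply/andP; split; last by move: b2; clear; lia.
  by apply/eqP => e; move: b3; rewrite e hlast.
apply: (@no_block m B hm0 hedge' hdir1 hdir2 alpha (m - delta - 1) i1 i2 _ hfirst hfirst_min hlast hlast_max a3 b3 hmeet).
split=> //; move: hdelta hm0; clear; lia.
Qed.
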